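(* Let $n\ge1$. If $p\in\mathcal{T}_n$, then $\iota(p)\notin\{1,2\}^n$.
   Context: $\Gamma=\{0,1,2,3\}$. $C=\{(a,b,c)\in\mathbb{R}^3: a\ge b\ge c>0,\ a+b+c=1\}$, $C^*=\{(a,b,c)\in C: a\ne1/2\}$. Regions of $C^*$: $R_0=\{a<1/2\}$, $R_1=\{2a-1\ge2b,\ a>1/2\}$, $R_2=\{2b>2a-1\ge2c,\ a>1/2\}$, $R_3=\{2c>2a-1,\ a>1/2\}$. Sorted pedal map $P:C^*\to C$: $P(a,b,c)=(1-2c,1-2b,1-2a)$ on $R_0$, $(2a-1,2b,2c)$ on $R_1$, $(2b,2a-1,2c)$ on $R_2$, $(2b,2c,2a-1)$ on $R_3$. $\mathcal{T}_n=\{p\in C: P^j(p)\text{ defined for }0\le j<n,\ P^n(p)=p,\ P^d(p)\ne p\text{ for }1\le d<n\}$. The itinerary $\iota(p)=w_0\cdots w_{n-1}\in\Gamma^n$ of $p\in\mathcal{T}_n$ is defined by $P^j(p)\in R_{w_j}$ for $0\le j<n$. *)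

(* Defs.v *)
From Stdlib Require Import Reals Lra.
Open Scope R_scope.

Definition pt := (R * R * R)%type.

Definition inC (p : pt) : Prop :=
  let '(a, b, c) := p in a >= b /\ b >= c /\ c > 0 /\ a + b + c = 1.

Definition inCstar (p : pt) : Prop :=
  let '(a, b, c) := p in inC p /\ a <> 1/2.

Definition inRegion (w : nat) (p : pt) : Prop :=
  let '(a, b, c) := p in
  inCstar p /\
  match w with
  | 0%nat => a < 1/2
  | 1%nat => 2*a - 1 >= 2*b /\ a > 1/2
  | 2%nat => 2*b > 2*a - 1 /\ 2*a - 1 >= 2*c /\ a > 1/2
  | 3%nat => 2*c > 2*a - 1 /\ a > 1/2
  | _ => False
  end.

(* The sorted pedal map P, extended to a total function on R^3 by the same
   case split; it agrees with P on Cstar; its values outside Cstar are never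
   used, since the statement requires P^j(p) to lie in Cstar. *)
Definition Pmap (p : pt) : pt :=
  let '(a, b, c) := p in
  if Rlt_dec a (1/2) then (1 - 2*c, 1 - 2*b, 1 - 2*a)
  else if Rge_dec (2*a - 1) (2*b) then (2*a - 1, 2*b, 2*c)
  else if Rge_dec (2*a - 1) (2*c) then (2*b, 2*a - 1, 2*c)
  else (2*b, 2*c, 2*a - 1).

Fixpoint Piter (j : nat) (p : pt) : pt :=
  match j with
  | O => p
  | S k => Pmap (Piter k p)
  end.

(* T_n: points of C of exact period n under P, with P^j(p) defined
   (i.e. P^j(p) in Cstar) for 0 <= j < n. *)
Definition inT (n : nat) (p : pt) : Prop :=
  inC p /\
  (forall j : nat, (j < n)%nat -> inCstar (Piter j p)) /\
  Piter n p = p /\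
  (forall d : nat, (1 <= d)%nat -> (d < n)%nat -> Piter d p <> p).

(* w is (a representative of) the itinerary of p of length n:
   P^j(p) lies in R_{w j} for 0 <= j < n. *)
Definition itinerary (n : nat) (p : pt) (w : nat -> nat) : Prop :=
  forall j : nat, (j < n)%nat -> inRegion (w j) (Piter j p).

(* Main.v *)
Require Import Defs.
From Stdlib Require Import Reals.
From Stdlib Require Import Lra Lia Classical.
Open Scope R_scope.

Lemma step12 (q : pt) : (inRegion 1 q \/ inRegion 2 q) -> snd (Pmap q) = 2 * snd q.
Proof.
  destruct q as [[a b] c]; simpl; intros H.
  destruct (Rlt_dec a (1/2)); [destruct H as [[_ H]|[_ H]]; lra|].
  destruct (Rge_dec (2*a-1) (2*b)); [reflexivity|].
  destruct (Rge_dec (2*a-1) (2*c)); [reflexivity|].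
  destruct H as [[_ H]|[_ H]]; lra.
Qed.

Theorem mainTheorem6 (n : nat) (p : pt) :
  (1 <= n)%nat -> inT n p ->
  forall w : nat -> nat, itinerary n p w ->
  exists j : nat, (j < n)%nat /\ w j <> 1%nat /\ w j <> 2%nat.
Proof.
  intros Hn [HC [_ [Hper _]]] w Hit.
  destruct (classic (exists j : nat, (j < n)%nat /\ w j <> 1%nat /\ w j <> 2%nat)) as [H|H]; [exact H|].
  exfalso.
  assert (Hall : forall j, (j < n)%nat -> inRegion 1 (Piter j p) \/ inRegion 2 (Piter j p)).
  { intros j Hj. specialize (Hit j Hj).
    destruct (Nat.eq_dec (w j) 1) as [E|E]; [left; rewrite <- E; exact Hit|].
    destruct (Nat.eq_dec (w j) 2) as [E2|E2]; [right; rewrite <- E2; exact Hit|].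
    exfalso; apply H; exists j; auto. }
  assert (Hk : forall k, (k <= n)%nat -> snd (Piter k p) = 2 ^ k * snd p).
  { induction k; intros Hkn; simpl.
    - ring.
    - rewrite step12 by (apply Hall; lia). rewrite IHk by lia. ring. }
  specialize (Hk n (le_n n)). rewrite Hper in Hk.
  destruct p as [[a b] c]. simpl in Hk. destruct HC as [_ [_ [Hc _]]].
  assert (H2 : 2 ^ n >= 2).
  { destruct n; [lia|]. simpl. assert (1 <= 2 ^ n) by (apply pow_R1_Rle; lra). lra. }
  nra.
Qed.
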